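(* Let $U_0, c_0, \rho_0 > 0$ be constants. Let $f_1, f_2, f_3, f_4 : \mathbb{R} \to \mathbb{R}$ be continuously differentiable functions and let $k_i, l_i, m_i$ ($i = 1,\dots,4$) be real numbers with $k_3 k_4 \neq 0$. Write $r_i = \sqrt{k_i^2 + l_i^2 + m_i^2}$ and $\xi_i = k_i x + l_i y + m_i z$. Define $$v_x'(x,y,z,t) = k_1 f_1[\xi_1 - (k_1 U_0 - c_0 r_1)t] + k_2 f_2[\xi_2 - (k_2 U_0 + c_0 r_2)t] + \tfrac{l_3}{k_3} f_3[\xi_3 - k_3 U_0 t] + \tfrac{m_4}{k_4} f_4[\xi_4 - k_4 U_0 t],$$ $$v_y'(x,y,z,t) = l_1 f_1[\xi_1 - (k_1 U_0 - c_0 r_1)t] + l_2 f_2[\xi_2 - (k_2 U_0 + c_0 r_2)t] - f_3[\xi_3 - k_3 U_0 t],$$ $$v_z'(x,y,z,t) = m_1 f_1[\xi_1 - (k_1 U_0 - c_0 r_1)t] + m_2 f_2[\xi_2 - (k_2 U_0 + c_0 r_2)t] - f_4[\xi_4 - k_4 U_0 t],$$ $$p'(x,y,z,t) = -c_0\rho_0 r_1 f_1[\xi_1 - (k_1 U_0 - c_0 r_1)t] + c_0 \rho_0 r_2 f_2[\xi_2 - (k_2 U_0 + c_0 r_2)t].$$ Then $(v_x', v_y', v_z', p')$ satisfies pointwise on $\mathbb{R}^3 \times \mathbb{R}$ the system $$\partial_t v_x' + U_0 \partial_x v_x' + \tfrac{1}{\rho_0}\partial_x p' = 0,\quad \partial_t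 v_y' + U_0 \partial_x v_y' + \tfrac{1}{\rho_0}\partial_y p' = 0,\quad \partial_t v_z' + U_0 \partial_x v_z' + \tfrac{1}{\rho_0}\partial_z p' = 0,$$ $$\partial_t p' + U_0 \partial_x p' + \rho_0 c_0^2(\partial_x v_x' + \partial_y v_y' + \partial_z v_z') = 0,$$ and the initial conditions $v_x'(x,y,z,0) = k_1 f_1(\xi_1) + k_2 f_2(\xi_2) + \frac{l_3}{k_3} f_3(\xi_3) + \frac{m_4}{k_4} f_4(\xi_4)$, $v_y'(x,y,z,0) = l_1 f_1(\xi_1) + l_2 f_2(\xi_2) - f_3(\xi_3)$, $v_z'(x,y,z,0) = m_1 f_1(\xi_1) + m_2 f_2(\xi_2) - f_4(\xi_4)$, $p'(x,y,z,0) = -c_0\rho_0 r_1 f_1(\xi_1) + c_0\rho_0 r_2 f_2(\xi_2)$.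
   Context: This system is the 3D Euler equations linearized at the uniform flow with velocity $(U_0,0,0)$, density $\rho_0$, pressure $p_0$, sound speed $c_0$. *)

(* Defs.v *)
From Stdlib Require Import Reals.
From Coquelicot Require Import Coquelicot.
Open Scope R_scope.

(* A scalar field on R^3 x R, arguments (x, y, z, t). *)
Definition field4 := R -> R -> R -> R -> R.

Definition is_C1 (f : R -> R) : Prop :=
  forall u, ex_derive f u /\ continuous (Derive f) u.

Definition d_x (F : field4) x y z t := Derive (fun s => F s y z t) x.
Definition d_y (F : field4) x y z t := Derive (fun s => F x s z t) y.
Definition d_z (F : field4) x y z t := Derive (fun s => F x y s t) z.
Definition d_t (F : field4) x y z t := Derive (fun s => F x y z s) t.

Definition has_partials (F : field4) : Prop :=
  forall x y z t,
    ex_derive (fun s => F s y z t) x /\ ex_derive (fun s => F x s z t) y /\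
    ex_derive (fun s => F x y s t) z /\ ex_derive (fun s => F x y z s) t.

Definition rr (k l m : R) : R := sqrt (k ^ 2 + l ^ 2 + m ^ 2).
Definition xi (k l m x y z : R) : R := k * x + l * y + m * z.

Definition w1 (U0 c0 rho0 : R) (f1 f2 f3 f4 : R -> R) (k1 l1 m1 k2 l2 m2 k3 l3 m3 k4 l4 m4 : R) x y z t := f1 (xi k1 l1 m1 x y z - (k1 * U0 - c0 * rr k1 l1 m1) * t).
Definition w2 (U0 c0 rho0 : R) (f1 f2 f3 f4 : R -> R) (k1 l1 m1 k2 l2 m2 k3 l3 m3 k4 l4 m4 : R) x y z t := f2 (xi k2 l2 m2 x y z - (k2 * U0 + c0 * rr k2 l2 m2) * t).
Definition w3 (U0 c0 rho0 : R) (f1 f2 f3 f4 : R -> R) (k1 l1 m1 k2 l2 m2 k3 l3 m3 k4 l4 m4 : R) x y z t := f3 (xi k3 l3 m3 x y z - k3 * U0 * t).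
Definition w4 (U0 c0 rho0 : R) (f1 f2 f3 f4 : R -> R) (k1 l1 m1 k2 l2 m2 k3 l3 m3 k4 l4 m4 : R) x y z t := f4 (xi k4 l4 m4 x y z - k4 * U0 * t).

Definition vx (U0 c0 rho0 : R) (f1 f2 f3 f4 : R -> R) (k1 l1 m1 k2 l2 m2 k3 l3 m3 k4 l4 m4 : R) : field4 := fun x y z t =>
  k1 * w1 U0 c0 rho0 f1 f2 f3 f4 k1 l1 m1 k2 l2 m2 k3 l3 m3 k4 l4 m4 x y z t + k2 * w2 U0 c0 rho0 f1 f2 f3 f4 k1 l1 m1 k2 l2 m2 k3 l3 m3 k4 l4 m4 x y z t
  + l3 / k3 * w3 U0 c0 rho0 f1 f2 f3 f4 k1 l1 m1 k2 l2 m2 k3 l3 m3 k4 l4 m4 x y z t + m4 / k4 * w4 U0 c0 rho0 f1 f2 f3 f4 k1 l1 m1 k2 l2 m2 k3 l3 m3 k4 l4 m4 x y z t.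
Definition vy (U0 c0 rho0 : R) (f1 f2 f3 f4 : R -> R) (k1 l1 m1 k2 l2 m2 k3 l3 m3 k4 l4 m4 : R) : field4 := fun x y z t =>
  l1 * w1 U0 c0 rho0 f1 f2 f3 f4 k1 l1 m1 k2 l2 m2 k3 l3 m3 k4 l4 m4 x y z t + l2 * w2 U0 c0 rho0 f1 f2 f3 f4 k1 l1 m1 k2 l2 m2 k3 l3 m3 k4 l4 m4 x y z t - w3 U0 c0 rho0 f1 f2 f3 f4 k1 l1 m1 k2 l2 m2 k3 l3 m3 k4 l4 m4 x y z t.
Definition vz (U0 c0 rho0 : R) (f1 f2 f3 f4 : R -> R) (k1 l1 m1 k2 l2 m2 k3 l3 m3 k4 l4 m4 : R) : field4 := fun x y z t =>
  m1 * w1 U0 c0 rho0 f1 f2 f3 f4 k1 l1 m1 k2 l2 m2 k3 l3 m3 k4 l4 m4 x y z t + m2 * w2 U0 c0 rho0 f1 f2 f3 f4 k1 l1 m1 k2 l2 m2 k3 l3 m3 k4 l4 m4 x y z t - w4 U0 c0 rho0 f1 f2 f3 f4 k1 l1 m1 k2 l2 m2 k3 l3 m3 k4 l4 m4 x y z t.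
Definition pp (U0 c0 rho0 : R) (f1 f2 f3 f4 : R -> R) (k1 l1 m1 k2 l2 m2 k3 l3 m3 k4 l4 m4 : R) : field4 := fun x y z t =>
  - c0 * rho0 * rr k1 l1 m1 * w1 U0 c0 rho0 f1 f2 f3 f4 k1 l1 m1 k2 l2 m2 k3 l3 m3 k4 l4 m4 x y z t + c0 * rho0 * rr k2 l2 m2 * w2 U0 c0 rho0 f1 f2 f3 f4 k1 l1 m1 k2 l2 m2 k3 l3 m3 k4 l4 m4 x y z t.

(* Main.v *)
Require Import Defs.
From Stdlib Require Import Reals Lra.
From Coquelicot Require Import Coquelicot.
Open Scope R_scope.

Lemma dplus (f g : R -> R) x a b : is_derive f x a -> is_derive g x b ->
  is_derive (fun u => f u + g u) x (a + b).
Proof. intros; now apply (is_derive_plus f g). Qed.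
Lemma dminus (f g : R -> R) x a b : is_derive f x a -> is_derive g x b ->
  is_derive (fun u => f u - g u) x (a - b).
Proof. intros; now apply (is_derive_minus f g). Qed.
Lemma dscal (f : R -> R) x k a : is_derive f x a ->
  is_derive (fun u => k * f u) x (k * a).
Proof. intros; now apply is_derive_scal. Qed.

Lemma aff_ext (h f : R -> R) a c s : (forall u, ex_derive f u) ->
  (forall u, h u = f (a * (u - s) + c)) -> is_derive h s (a * Derive f c).
Proof.
  intros Hf Hh.
  apply is_derive_ext with (f := fun u => f (a * (u - s) + c)).
  { intro u; now rewrite Hh. }
  replace (a * Derive f c) with (scal a (Derive f c)) by reflexivity.
  apply (is_derive_comp f (fun u => a * (u - s) + c)).
  - replace (a * (s - s) + c) with c by ring. apply Derive_correct, Hf.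
  - evar (l : R). replace a with l. 2:{ unfold l. reflexivity. }
    unfold l. auto_derive; auto. ring.
Qed.

Definition dV (a1 a2 a3 a4 b1 b2 b3 b4 : R) := a1 + a2 + a3 + a4.
Lemma Dunique (f : R -> R) x l : is_derive f x l -> Derive f x = l.
Proof. apply is_derive_unique. Qed.

Ltac step := match goal with
| |- is_derive (fun u => _ + _) _ _ => apply dplus
| |- is_derive (fun u => _ - _) _ _ => apply dminus
| |- is_derive (fun u => _ * _) _ _ => apply dscal
end.
Ltac solve_d := cbv beta; repeat step;
  (eapply aff_ext; [assumption | intro u; unfold w1,w2,w3,w4,xi; f_equal; ring]).

Theorem proposition5 (U0 c0 rho0 : R) (f1 f2 f3 f4 : R -> R)
  (k1 l1 m1 k2 l2 m2 k3 l3 m3 k4 l4 m4 : R) :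
  0 < U0 -> 0 < c0 -> 0 < rho0 ->
  is_C1 f1 -> is_C1 f2 -> is_C1 f3 -> is_C1 f4 ->
  k3 * k4 <> 0 ->
  let Vx := vx U0 c0 rho0 f1 f2 f3 f4 k1 l1 m1 k2 l2 m2 k3 l3 m3 k4 l4 m4 in
  let Vy := vy U0 c0 rho0 f1 f2 f3 f4 k1 l1 m1 k2 l2 m2 k3 l3 m3 k4 l4 m4 in
  let Vz := vz U0 c0 rho0 f1 f2 f3 f4 k1 l1 m1 k2 l2 m2 k3 l3 m3 k4 l4 m4 in
  let P := pp U0 c0 rho0 f1 f2 f3 f4 k1 l1 m1 k2 l2 m2 k3 l3 m3 k4 l4 m4 in
  (has_partials Vx /\ has_partials Vy /\ has_partials Vz /\ has_partials P) /\
  (forall x y z t,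
     d_t Vx x y z t + U0 * d_x Vx x y z t + / rho0 * d_x P x y z t = 0 /\
     d_t Vy x y z t + U0 * d_x Vy x y z t + / rho0 * d_y P x y z t = 0 /\
     d_t Vz x y z t + U0 * d_x Vz x y z t + / rho0 * d_z P x y z t = 0 /\
     d_t P x y z t + U0 * d_x P x y z t
       + rho0 * c0 ^ 2 * (d_x Vx x y z t + d_y Vy x y z t + d_z Vz x y z t) = 0) /\
  (forall x y z,
     Vx x y z 0 = k1 * f1 (xi k1 l1 m1 x y z) + k2 * f2 (xi k2 l2 m2 x y z)
                  + l3 / k3 * f3 (xi k3 l3 m3 x y z) + m4 / k4 * f4 (xi k4 l4 m4 x y z) /\
     Vy x y z 0 = l1 * f1 (xi k1 l1 m1 x y z) + l2 * f2 (xi k2 l2 m2 x y z)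
                  - f3 (xi k3 l3 m3 x y z) /\
     Vz x y z 0 = m1 * f1 (xi k1 l1 m1 x y z) + m2 * f2 (xi k2 l2 m2 x y z)
                  - f4 (xi k4 l4 m4 x y z) /\
     P x y z 0 = - c0 * rho0 * rr k1 l1 m1 * f1 (xi k1 l1 m1 x y z)
                 + c0 * rho0 * rr k2 l2 m2 * f2 (xi k2 l2 m2 x y z)).
Proof.
intros HU Hc Hr H1 H2 H3 H4 Hk Vx Vy Vz P.
assert (E1 : forall u, ex_derive f1 u) by (intro u; apply H1).
assert (E2 : forall u, ex_derive f2 u) by (intro u; apply H2).
assert (E3 : forall u, ex_derive f3 u) by (intro u; apply H3).
assert (E4 : forall u, ex_derive f4 u) by (intro u; apply H4).
assert (Ivxx : forall x y z t : R, is_derive (fun s : R => Vx s y z t) x (k1 * (k1 * Derive f1 (xi k1 l1 m1 x y z - (k1 * U0 - c0 * rr k1 l1 m1) * t)) + k2 * (k2 * Derive f2 (xi k2 l2 m2 x y z - (k2 * U0 + c0 * rr k2 l2 m2) * t)) + l3 / k3 * (k3 * Derive f3 (xi k3 l3 m3 x y z - k3 * U0 * t)) + m4 / k4 * (k4 * Derive f4 (xi k4 l4 m4 x y z - k4 * U0 * t)))).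
{ intros x y z t; unfold Vx, vx; solve_d. }
assert (Ivxy : forall x y z t : R, is_derive (fun s : R => Vx x s z t) y (k1 * (l1 * Derive f1 (xi k1 l1 m1 x y z - (k1 * U0 - c0 * rr k1 l1 m1) * t)) + k2 * (l2 * Derive f2 (xi k2 l2 m2 x y z - (k2 * U0 + c0 * rr k2 l2 m2) * t)) + l3 / k3 * (l3 * Derive f3 (xi k3 l3 m3 x y z - k3 * U0 * t)) + m4 / k4 * (l4 * Derive f4 (xi k4 l4 m4 x y z - k4 * U0 * t)))).
{ intros x y z t; unfold Vx, vx; solve_d. }
assert (Ivxz : forall x y z t : R, is_derive (fun s : R => Vx x y s t) z (k1 * (m1 * Derive f1 (xi k1 l1 m1 x y z - (k1 * U0 - c0 * rr k1 l1 m1) * t)) + k2 * (m2 * Derive f2 (xi k2 l2 m2 x y z - (k2 * U0 + c0 * rr k2 l2 m2) * t)) + l3 / k3 * (m3 * Derive f3 (xi k3 l3 m3 x y z - k3 * U0 * t)) + m4 / k4 * (m4 * Derive f4 (xi k4 l4 m4 x y z - k4 * U0 * t)))).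
{ intros x y z t; unfold Vx, vx; solve_d. }
assert (Ivxt : forall x y z t : R, is_derive (fun s : R => Vx x y z s) t (k1 * ((-(k1 * U0 - c0 * rr k1 l1 m1)) * Derive f1 (xi k1 l1 m1 x y z - (k1 * U0 - c0 * rr k1 l1 m1) * t)) + k2 * ((-(k2 * U0 + c0 * rr k2 l2 m2)) * Derive f2 (xi k2 l2 m2 x y z - (k2 * U0 + c0 * rr k2 l2 m2) * t)) + l3 / k3 * ((-(k3 * U0)) * Derive f3 (xi k3 l3 m3 x y z - k3 * U0 * t)) + m4 / k4 * ((-(k4 * U0)) * Derive f4 (xi k4 l4 m4 x y z - k4 * U0 * t)))).
{ intros x y z t; unfold Vx, vx; solve_d. }
assert (Ivyx : forall x y z t : R, is_derive (fun s : R => Vy s y z t) x (l1 * (k1 * Derive f1 (xi k1 l1 m1 x y z - (k1 * U0 - c0 * rr k1 l1 m1) * t)) + l2 * (k2 * Derive f2 (xi k2 l2 m2 x y z - (k2 * U0 + c0 * rr k2 l2 m2) * t)) - (k3 * Derive f3 (xi k3 l3 m3 x y z - k3 * U0 * t)))).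
{ intros x y z t; unfold Vy, vy; solve_d. }
assert (Ivyy : forall x y z t : R, is_derive (fun s : R => Vy x s z t) y (l1 * (l1 * Derive f1 (xi k1 l1 m1 x y z - (k1 * U0 - c0 * rr k1 l1 m1) * t)) + l2 * (l2 * Derive f2 (xi k2 l2 m2 x y z - (k2 * U0 + c0 * rr k2 l2 m2) * t)) - (l3 * Derive f3 (xi k3 l3 m3 x y z - k3 * U0 * t)))).
{ intros x y z t; unfold Vy, vy; solve_d. }
assert (Ivyz : forall x y z t : R, is_derive (fun s : R => Vy x y s t) z (l1 * (m1 * Derive f1 (xi k1 l1 m1 x y z - (k1 * U0 - c0 * rr k1 l1 m1) * t)) + l2 * (m2 * Derive f2 (xi k2 l2 m2 x y z - (k2 * U0 + c0 * rr k2 l2 m2) * t)) - (m3 * Derive f3 (xi k3 l3 m3 x y z - k3 * U0 * t)))).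
{ intros x y z t; unfold Vy, vy; solve_d. }
assert (Ivyt : forall x y z t : R, is_derive (fun s : R => Vy x y z s) t (l1 * ((-(k1 * U0 - c0 * rr k1 l1 m1)) * Derive f1 (xi k1 l1 m1 x y z - (k1 * U0 - c0 * rr k1 l1 m1) * t)) + l2 * ((-(k2 * U0 + c0 * rr k2 l2 m2)) * Derive f2 (xi k2 l2 m2 x y z - (k2 * U0 + c0 * rr k2 l2 m2) * t)) - ((-(k3 * U0)) * Derive f3 (xi k3 l3 m3 x y z - k3 * U0 * t)))).
{ intros x y z t; unfold Vy, vy; solve_d. }
assert (Ivzx : forall x y z t : R, is_derive (fun s : R => Vz s y z t) x (m1 * (k1 * Derive f1 (xi k1 l1 m1 x y z - (k1 * U0 - c0 * rr k1 l1 m1) * t)) + m2 * (k2 * Derive f2 (xi k2 l2 m2 x y z - (k2 * U0 + c0 * rr k2 l2 m2) * t)) - (k4 * Derive f4 (xi k4 l4 m4 x y z - k4 * U0 * t)))).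
{ intros x y z t; unfold Vz, vz; solve_d. }
assert (Ivzy : forall x y z t : R, is_derive (fun s : R => Vz x s z t) y (m1 * (l1 * Derive f1 (xi k1 l1 m1 x y z - (k1 * U0 - c0 * rr k1 l1 m1) * t)) + m2 * (l2 * Derive f2 (xi k2 l2 m2 x y z - (k2 * U0 + c0 * rr k2 l2 m2) * t)) - (l4 * Derive f4 (xi k4 l4 m4 x y z - k4 * U0 * t)))).
{ intros x y z t; unfold Vz, vz; solve_d. }
assert (Ivzz : forall x y z t : R, is_derive (fun s : R => Vz x y s t) z (m1 * (m1 * Derive f1 (xi k1 l1 m1 x y z - (k1 * U0 - c0 * rr k1 l1 m1) * t)) + m2 * (m2 * Derive f2 (xi k2 l2 m2 x y z - (k2 * U0 + c0 * rr k2 l2 m2) * t)) - (m4 * Derive f4 (xi k4 l4 m4 x y z - k4 * U0 * t)))).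
{ intros x y z t; unfold Vz, vz; solve_d. }
assert (Ivzt : forall x y z t : R, is_derive (fun s : R => Vz x y z s) t (m1 * ((-(k1 * U0 - c0 * rr k1 l1 m1)) * Derive f1 (xi k1 l1 m1 x y z - (k1 * U0 - c0 * rr k1 l1 m1) * t)) + m2 * ((-(k2 * U0 + c0 * rr k2 l2 m2)) * Derive f2 (xi k2 l2 m2 x y z - (k2 * U0 + c0 * rr k2 l2 m2) * t)) - ((-(k4 * U0)) * Derive f4 (xi k4 l4 m4 x y z - k4 * U0 * t)))).
{ intros x y z t; unfold Vz, vz; solve_d. }
assert (Ippx : forall x y z t : R, is_derive (fun s : R => P s y z t) x (- c0 * rho0 * rr k1 l1 m1 * (k1 * Derive f1 (xi k1 l1 m1 x y z - (k1 * U0 - c0 * rr k1 l1 m1) * t)) + c0 * rho0 * rr k2 l2 m2 * (k2 * Derive f2 (xi k2 l2 m2 x y z - (k2 * U0 + c0 * rr k2 l2 m2) * t)))).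
{ intros x y z t; unfold P, pp; solve_d. }
assert (Ippy : forall x y z t : R, is_derive (fun s : R => P x s z t) y (- c0 * rho0 * rr k1 l1 m1 * (l1 * Derive f1 (xi k1 l1 m1 x y z - (k1 * U0 - c0 * rr k1 l1 m1) * t)) + c0 * rho0 * rr k2 l2 m2 * (l2 * Derive f2 (xi k2 l2 m2 x y z - (k2 * U0 + c0 * rr k2 l2 m2) * t)))).
{ intros x y z t; unfold P, pp; solve_d. }
assert (Ippz : forall x y z t : R, is_derive (fun s : R => P x y s t) z (- c0 * rho0 * rr k1 l1 m1 * (m1 * Derive f1 (xi k1 l1 m1 x y z - (k1 * U0 - c0 * rr k1 l1 m1) * t)) + c0 * rho0 * rr k2 l2 m2 * (m2 * Derive f2 (xi k2 l2 m2 x y z - (k2 * U0 + c0 * rr k2 l2 m2) * t)))).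
{ intros x y z t; unfold P, pp; solve_d. }
assert (Ippt : forall x y z t : R, is_derive (fun s : R => P x y z s) t (- c0 * rho0 * rr k1 l1 m1 * ((-(k1 * U0 - c0 * rr k1 l1 m1)) * Derive f1 (xi k1 l1 m1 x y z - (k1 * U0 - c0 * rr k1 l1 m1) * t)) + c0 * rho0 * rr k2 l2 m2 * ((-(k2 * U0 + c0 * rr k2 l2 m2)) * Derive f2 (xi k2 l2 m2 x y z - (k2 * U0 + c0 * rr k2 l2 m2) * t)))).
{ intros x y z t; unfold P, pp; solve_d. }
split.
{ split; [|split; [|split]].
  - intros x y z t; exact (conj (ex_intro _ _ (Ivxx x y z t)) (conj (ex_intro _ _ (Ivxy x y z t)) (conj (ex_intro _ _ (Ivxz x y z t)) (ex_intro _ _ (Ivxt x y z t))))).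
  - intros x y z t; exact (conj (ex_intro _ _ (Ivyx x y z t)) (conj (ex_intro _ _ (Ivyy x y z t)) (conj (ex_intro _ _ (Ivyz x y z t)) (ex_intro _ _ (Ivyt x y z t))))).
  - intros x y z t; exact (conj (ex_intro _ _ (Ivzx x y z t)) (conj (ex_intro _ _ (Ivzy x y z t)) (conj (ex_intro _ _ (Ivzz x y z t)) (ex_intro _ _ (Ivzt x y z t))))).
  - intros x y z t; exact (conj (ex_intro _ _ (Ippx x y z t)) (conj (ex_intro _ _ (Ippy x y z t)) (conj (ex_intro _ _ (Ippz x y z t)) (ex_intro _ _ (Ippt x y z t))))).
}
split.
{ intros x y z t. unfold d_x, d_y, d_z, d_t.
  try rewrite (Dunique _ _ _ (Ivxx x y z t)).
  try rewrite (Dunique _ _ _ (Ivxy x y z t)).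
  try rewrite (Dunique _ _ _ (Ivxz x y z t)).
  try rewrite (Dunique _ _ _ (Ivxt x y z t)).
  try rewrite (Dunique _ _ _ (Ivyx x y z t)).
  try rewrite (Dunique _ _ _ (Ivyy x y z t)).
  try rewrite (Dunique _ _ _ (Ivyz x y z t)).
  try rewrite (Dunique _ _ _ (Ivyt x y z t)).
  try rewrite (Dunique _ _ _ (Ivzx x y z t)).
  try rewrite (Dunique _ _ _ (Ivzy x y z t)).
  try rewrite (Dunique _ _ _ (Ivzz x y z t)).
  try rewrite (Dunique _ _ _ (Ivzt x y z t)).
  try rewrite (Dunique _ _ _ (Ippx x y z t)).
  try rewrite (Dunique _ _ _ (Ippy x y z t)).
  try rewrite (Dunique _ _ _ (Ippz x y z t)).
  try rewrite (Dunique _ _ _ (Ippt x y z t)).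
  assert (Hk3 : k3 <> 0) by (intro; apply Hk; subst; ring).
  assert (Hk4 : k4 <> 0) by (intro; apply Hk; subst; ring).
  assert (Hr0 : rho0 <> 0) by lra.
  assert (S1 : rr k1 l1 m1 * rr k1 l1 m1 = k1^2 + l1^2 + m1^2).
  { unfold rr; apply sqrt_sqrt; nra. }
  assert (S2 : rr k2 l2 m2 * rr k2 l2 m2 = k2^2 + l2^2 + m2^2).
  { unfold rr; apply sqrt_sqrt; nra. }
  repeat split.
  - field; auto.
  - field; auto.
  - field; auto.
  - transitivity (rho0 * c0^2 * ((Derive f1 (xi k1 l1 m1 x y z - (k1 * U0 - c0 * rr k1 l1 m1) * t)) * (k1^2 + l1^2 + m1^2 - rr k1 l1 m1 * rr k1 l1 m1) + (Derive f2 (xi k2 l2 m2 x y z - (k2 * U0 + c0 * rr k2 l2 m2) * t)) * (k2^2 + l2^2 + m2^2 - rr k2 l2 m2 * rr k2 l2 m2))).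
    + field; auto.
    + rewrite S1, S2; ring. }
{ intros x y z; unfold Vx, Vy, Vz, P, vx, vy, vz, pp, w1, w2, w3, w4.
  repeat split; repeat rewrite Rmult_0_r; repeat rewrite Rminus_0_r; reflexivity. }
Qed.
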